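(* Let $\gamma$ be an arc-length parametrized curve in a $2$-dimensional real space form $M^2(G)$ with curvature $k$, and let $(T_{\mathcal{P},\gamma}(\Lambda_G),[\cdot,\cdot]_\gamma)$ and $\mathrm{der}^*(\mathcal{P})$ be as below. The map $\Phi_\gamma:T_{\mathcal{P},\gamma}(\Lambda_G)\to\mathrm{der}^*(\mathcal{P})$, $\Phi_\gamma(\mathbf{V})=\partial_{\mathbf{V}(k)}$, is a homomorphism of Lie algebras.
   Context: $\mathcal{P}=\mathbb{R}[k^{(m)}:m\in\mathbb{N}]$ (polynomials in $k$ and its arc-length derivatives), $\mathcal{P}_0$ those with zero constant term. For $a\in\mathcal{P}$, $\partial_a=\sum_{m\ge0}a^{(m)}\frac{\partial}{\partial k^{(m)}}$ is a derivation of $\mathcal{P}$; $\mathrm{der}^*(\mathcal{P})=\{\partial_a:a\in\mathcal{P}\}$ is a Lie algebra under the commutator, with $[\partial_a,\partial_b]=\partial_{\partial_ab-\partial_ba}$. Frenet frame $\{\mathbf{T},\mathbf{N}\}$ with $\nabla_{\mathbf{T}}\mathbf{T}=k\mathbf{N}$, $\nabla_{\mathbf{T}}\mathbf{N}=-k\mathbf{T}$. $T_{\mathcal{P},\gamma}(\Lambda_G)=\{\mathbf{V}=f\mathbf{T}+g\mathbf{N}: f,g\in\mathcal{P},\ f\in\mathcal{P}_0,\ f'=kg\}$. For $\mathbf{V}=f\mathbf{T}+g\mathbf{N}$ with $f,g\in\mathcal{P}$ put $\rho_{\mathbf{V}}=f'-kg$, $\varphi_{\mathbf{V}}=g'+kf$;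 $\mathbf{V}$ acts on $\mathcal{P}$ as the derivation with $\mathbf{V}(k)=\varphi_{\mathbf{V}}'-k\rho_{\mathbf{V}}+Gg$ and $\mathbf{V}(h')=\mathbf{V}(h)'+\rho_{\mathbf{V}}h'$ (so for $\mathbf{V}\in T_{\mathcal{P},\gamma}(\Lambda_G)$, $\mathbf{V}(k)=\varphi_{\mathbf{V}}'+Gg$). Define $D_{\mathbf{V}}\mathbf{W}=(\mathbf{V}(f_{\mathbf{W}})-g_{\mathbf{W}}\varphi_{\mathbf{V}})\mathbf{T}+(\mathbf{V}(g_{\mathbf{W}})+f_{\mathbf{W}}\varphi_{\mathbf{V}})\mathbf{N}$ for $\mathbf{W}=f_{\mathbf{W}}\mathbf{T}+g_{\mathbf{W}}\mathbf{N}$, and the Lie bracket $[\mathbf{V},\mathbf{W}]_\gamma=D_{\mathbf{V}}\mathbf{W}-D_{\mathbf{W}}\mathbf{V}$, under which $T_{\mathcal{P},\gamma}(\Lambda_G)$ is a Lie algebra. *)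

(* Defs.v *)
From HB Require Import structures.
From mathcomp Require Import all_boot all_order all_algebra.
From mathcomp Require Import finmap.
From mathcomp.multinomials Require Import monalg.
From mathcomp Require Import reals.

Set Implicit Arguments.
Unset Strict Implicit.
Unset Printing Implicit Defensive.

Import Order.TTheory GRing.Theory Num.Theory.
Local Open Scope ring_scope.

Section Defs.
Variable R : realType.

(* P = R[k^(m) : m in nat]: the free commutative R-algebra on the
   variables k^(0), k^(1), ... (monomials = finitely supported nat -> nat). *)
Definition P := {malg R[{cmonom nat}]}.

Definition kv (m : nat) : P := << (@ucm nat m) >>.

Definition const_term (p : P) : R := p@_(@onecm nat).

Definition pd (m : nat) (p : P) : P :=
  \sum_(mon <- msupp p) (p@_mon * (mon m)%:R) *: << divcm mon (@ucm nat m) >>.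

Definition nvar (p : P) : nat :=
  (\max_(mon <- msupp p) \max_(i <- finsupp mon) i.+1)%N.

(* the derivation of P sending k^(i) to e i:  p |-> sum_i e i * dp/dk^(i) *)
Definition extD (e : nat -> P) (p : P) : P :=
  \sum_(i < nvar p) e i * pd i p.

(* arc-length derivative  h |-> h' , the derivation with (k^(m))' = k^(m+1) *)
Definition D (p : P) : P := extD (fun i => kv i.+1) p.

Definition Dn (m : nat) (a : P) : P := iter m D a.

Definition pder (a : P) (h : P) : P := extD (fun i => Dn i a) h.

(* vector fields V = f T + g N, represented as the pair (f, g) *)
Definition VF := (P * P)%type.

Definition rhoV (V : VF) : P := D V.1 - kv 0 * V.2.
Definition phiV (V : VF) : P := D V.2 + kv 0 * V.1.

Definition Vk (G : R) (V : VF) : P := D (phiV V) - kv 0 * rhoV V + G%:MP * V.2.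

(* V(k^(m)), determined by V(h') = V(h)' + rho_V h' *)
Fixpoint Vgen (G : R) (V : VF) (m : nat) : P :=
  match m with
  | 0 => Vk G V
  | m'.+1 => D (Vgen G V m') + rhoV V * kv m'.+1
  end.

Definition Vact (G : R) (V : VF) (h : P) : P := extD (Vgen G V) h.

(* membership in T_{P,gamma}(Lambda_G):  f in P_0 and f' = k g *)
Definition inT (V : VF) : Prop := const_term V.1 = 0 /\ D V.1 = kv 0 * V.2.

Definition covD (G : R) (V W : VF) : VF :=
  (Vact G V W.1 - W.2 * phiV V, Vact G V W.2 + W.1 * phiV V).

Definition brk (G : R) (V W : VF) : VF :=
  ((covD G V W).1 - (covD G W V).1, (covD G V W).2 - (covD G W V).2).

Definition addVF (V W : VF) : VF := (V.1 + W.1, V.2 + W.2).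
Definition scaleVF (c : R) (V : VF) : VF := (c *: V.1, c *: V.2).

Definition Phi (G : R) (V : VF) : P -> P := pder (Vk G V).

End Defs.

(* Main.v *)
Require Import Defs.
From mathcomp Require Import reals.
From HB Require Import structures.
From mathcomp Require Import all_boot all_order all_algebra.
From mathcomp Require Import finmap.
From mathcomp.multinomials Require Import monalg.
From mathcomp Require Import ring.
Import GRing.Theory.
Local Open Scope ring_scope.
Set Implicit Arguments.
Unset Strict Implicit.
From mathcomp Require Import zify.
Set Implicit Arguments.
Unset Strict Implicit.
Lemma key (B : comRingType) (D d1 d2 : B -> B) (k f g f2 g2 Gc : B) :
  (forall x y, D (x + y) = D x + D y) -> (forall x, D (- x) = - D x) ->
  (forall x y, D (x * y) = D x * y + x * D y) ->
  (forall x y, d1 (x + y) = d1 x + d1 y) -> (forall x, d1 (- x) = - d1 x) ->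
  (forall x y, d1 (x * y) = d1 x * y + x * d1 y) ->
  (forall x y, d2 (x + y) = d2 x + d2 y) -> (forall x, d2 (- x) = - d2 x) ->
  (forall x y, d2 (x * y) = d2 x * y + x * d2 y) ->
  (forall x, d1 (D x) = D (d1 x)) -> (forall x, d2 (D x) = D (d2 x)) ->
  D f = k * g -> D f2 = k * g2 -> D Gc = 0 -> d1 Gc = 0 -> d2 Gc = 0 ->
  d1 k = D (D g + k * f) - k * (D f - k * g) + Gc * g ->
  d2 k = D (D g2 + k * f2) - k * (D f2 - k * g2) + Gc * g2 ->
  let X := (d1 f2 - g2 * (D g + k * f)) - (d2 f - g * (D g2 + k * f2)) in
  let Y := (d1 g2 + f2 * (D g + k * f)) - (d2 g + f * (D g2 + k * f2)) in
  D (D Y + k * X) - k * (D X - k * Y) + Gc * Y =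
  d1 (D (D g2 + k * f2) - k * (D f2 - k * g2) + Gc * g2)
  - d2 (D (D g + k * f) - k * (D f - k * g) + Gc * g).
Proof.
move=> DD DN DM d1D d1N d1M d2D d2N d2M c1 c2 hf hf2 hG h1G h2G h1k h2k X Y.
have Dd1 x : D (d1 x) = d1 (D x) by rewrite c1.
have Dd2 x : D (d2 x) = d2 (D x) by rewrite c2.
have h1Dk : d1 (D k) = D (D (D g + k * f) - k * (D f - k * g) + Gc * g) by rewrite c1 h1k.
have h2Dk : d2 (D k) = D (D (D g2 + k * f2) - k * (D f2 - k * g2) + Gc * g2) by rewrite c2 h2k.
rewrite /X /Y.
rewrite !(DD, DN, DM, d1D, d1N, d1M, d2D, d2N, d2M, Dd1, Dd2, hf, hf2, hG, h1G, h2G, h1Dk, h2Dk, h1k, h2k).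
ring.
Qed.
Section Abstract.
Variables (R : comRingType) (A : comAlgType R).
Variables (pdA : nat -> A -> A) (nv : A -> nat) (kvA : nat -> A) (cst : R -> A).

Definition isDer (d : A -> A) :=
  [/\ (forall x y, d (x + y) = d x + d y), (forall (c : R) x, d (c *: x) = c *: d x)
    & (forall x y, d (x * y) = d x * y + x * d y)].

Hypothesis Hpd : forall i, isDer (pdA i).
Hypothesis Hnv : forall i p, (nv p <= i)%N -> pdA i p = 0.
Hypothesis Hkv : forall i j, pdA i (kvA j) = (i == j)%:R.
Hypothesis Hind : forall Q : A -> Prop, Q 1 -> (forall i, Q (kvA i)) ->
  (forall x y, Q x -> Q y -> Q (x + y)) -> (forall x y, Q x -> Q y -> Q (x * y)) ->
  (forall c x, Q x -> Q (c *: x)) -> forall p, Q p.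
Hypothesis Hcst : forall c, cst c = c *: 1.

Definition extDA (e : nat -> A) (p : A) : A := \sum_(i < nv p) e i * pdA i p.
Definition DA (p : A) : A := extDA (fun i => kvA i.+1) p.
Definition DnA (m : nat) (a : A) : A := iter m DA a.
Definition pderA (a : A) (h : A) : A := extDA (fun i => DnA i a) h.
Definition rhoA (V : A * A) : A := DA V.1 - kvA 0 * V.2.
Definition phiA (V : A * A) : A := DA V.2 + kvA 0 * V.1.
Definition VkA (G : R) (V : A * A) : A := DA (phiA V) - kvA 0 * rhoA V + cst G * V.2.
Fixpoint VgenA (G : R) (V : A * A) (m : nat) : A :=
  match m with
  | 0 => VkA G V
  | m'.+1 => DA (VgenA G V m') + rhoA V * kvA m'.+1
  end.
Definition VactA (G : R) (V : A * A) (h : A) : A := extDA (VgenA G V) h.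
Definition covDA (G : R) (V W : A * A) : A * A :=
  (VactA G V W.1 - W.2 * phiA V, VactA G V W.2 + W.1 * phiA V).
Definition brkA (G : R) (V W : A * A) : A * A :=
  ((covDA G V W).1 - (covDA G W V).1, (covDA G V W).2 - (covDA G W V).2).
Definition addVFA (V W : A * A) : A * A := (V.1 + W.1, V.2 + W.2).
Definition scaleVFA (c : R) (V : A * A) : A * A := (c *: V.1, c *: V.2).
Definition PhiA (G : R) (V : A * A) : A -> A := pderA (VkA G V).

Section DerLemmas.
Variable d : A -> A.
Hypothesis hd : isDer d.
Lemma derD x y : d (x + y) = d x + d y. Proof. by case: hd. Qed.
Lemma derZ c x : d (c *: x) = c *: d x. Proof. by case: hd. Qed.
Lemma derM x y : d (x * y) = d x * y + x * d y. Proof. by case: hd. Qed.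
Lemma der0 : d 0 = 0.
Proof. by have := derZ 0 0; rewrite !scale0r. Qed.
Lemma derN x : d (- x) = - d x.
Proof. by rewrite -scaleN1r derZ scaleN1r. Qed.
Lemma derB x y : d (x - y) = d x - d y.
Proof. by rewrite derD derN. Qed.
Lemma der1 : d 1 = 0.
Proof.
have h := derM 1 1; rewrite !mulr1 !mul1r in h.
by apply: (addrI (d 1)); rewrite addr0 -h.
Qed.
End DerLemmas.

Lemma der_uniq d1 d2 : isDer d1 -> isDer d2 ->
  (forall i, d1 (kvA i) = d2 (kvA i)) -> forall p, d1 p = d2 p.
Proof.
move=> h1 h2 hk; apply: Hind => //.
- by rewrite (der1 h1) (der1 h2).
- by move=> x y hx hy; rewrite (derD h1) (derD h2) hx hy.
- by move=> x y hx hy; rewrite (derM h1) (derM h2) hx hy.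
- by move=> c x hx; rewrite (derZ h1) (derZ h2) hx.
Qed.

Lemma extDA_w e p n : (nv p <= n)%N -> extDA e p = \sum_(i < n) e i * pdA i p.
Proof.
move=> h; rewrite /extDA (big_ord_widen n (fun i => e i * pdA i p) h) big_mkcond /=.
apply: eq_bigr => i _; case: ifP => // /negbT; rewrite -leqNgt => hi.
by rewrite Hnv // mulr0.
Qed.

Lemma extDA_der e : isDer (extDA e).
Proof.
split.
- move=> x y; set n := maxn (nv (x + y)) (maxn (nv x) (nv y)).
  have b1 : (nv (x + y) <= n)%N by rewrite /n; lia.
  have b2 : (nv x <= n)%N by rewrite /n; lia.
  have b3 : (nv y <= n)%N by rewrite /n; lia.
  rewrite (extDA_w e b1) (extDA_w e b2) (extDA_w e b3) -big_split /=.
  by apply: eq_bigr => i _; rewrite (derD (Hpd i)) mulrDr.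
- move=> c x; set n := maxn (nv (c *: x)) (nv x).
  have b1 : (nv (c *: x) <= n)%N by rewrite /n; lia.
  have b2 : (nv x <= n)%N by rewrite /n; lia.
  rewrite (extDA_w e b1) (extDA_w e b2) scaler_sumr.
  by apply: eq_bigr => i _; rewrite (derZ (Hpd i)) scalerAr.
- move=> x y; set n := maxn (nv (x * y)) (maxn (nv x) (nv y)).
  have b1 : (nv (x * y) <= n)%N by rewrite /n; lia.
  have b2 : (nv x <= n)%N by rewrite /n; lia.
  have b3 : (nv y <= n)%N by rewrite /n; lia.
  rewrite (extDA_w e b1) (extDA_w e b2) (extDA_w e b3) mulr_suml mulr_sumr -big_split /=.
  by apply: eq_bigr => i _; rewrite (derM (Hpd i)); ring.
Qed.

Lemma extDA_kv e j : extDA e (kvA j) = e j.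
Proof.
set n := maxn (nv (kvA j)) j.+1.
have b1 : (nv (kvA j) <= n)%N by rewrite /n; lia.
have hj : (j < n)%N by rewrite /n; lia.
rewrite (extDA_w e b1) (bigD1 (Ordinal hj)) //= Hkv eqxx mulr1 big1 ?addr0 //.
move=> i hi; rewrite Hkv; case: eqP => [hij|_]; last by rewrite mulr0.
by move: hi; rewrite (_ : i = Ordinal hj) ?eqxx //; apply: val_inj.
Qed.

Lemma DA_der : isDer DA. Proof. exact: extDA_der. Qed.
Lemma DA_kv i : DA (kvA i) = kvA i.+1. Proof. exact: extDA_kv. Qed.
Lemma pderA_der a : isDer (pderA a). Proof. exact: extDA_der. Qed.
Lemma pderA_kv a i : pderA a (kvA i) = DnA i a. Proof. exact: extDA_kv. Qed.

Lemma DnA_D m x y : DnA m (x + y) = DnA m x + DnA m y.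
Proof. by elim: m => //= m IH; rewrite IH (derD DA_der). Qed.
Lemma DnA_Z m c x : DnA m (c *: x) = c *: DnA m x.
Proof. by elim: m => //= m IH; rewrite IH (derZ DA_der). Qed.
Lemma DnA_B m x y : DnA m (x - y) = DnA m x - DnA m y.
Proof. by rewrite DnA_D -scaleN1r DnA_Z scaleN1r. Qed.

Lemma comm_der d1 d2 : isDer d1 -> isDer d2 -> isDer (fun p => d1 (d2 p) - d2 (d1 p)).
Proof.
move=> h1 h2; split.
- by move=> x y; rewrite (derD h2) (derD h1) (derD h1) (derD h2); ring.
- by move=> c x; rewrite (derZ h2) (derZ h1) (derZ h1) (derZ h2) scalerBr.
- move=> x y; rewrite (derM h2) (derM h1) (derD h1) (derM h1) (derM h1).
  by rewrite (derD h2) (derM h2) (derM h2); ring.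
Qed.

Lemma zero_der : isDer (fun _ => 0).
Proof. split=> [x y|c x|x y] /=; [by rewrite addr0 | by rewrite scaler0 | by rewrite mul0r mulr0 addr0]. Qed.

Lemma pder_D a p : pderA a (DA p) = DA (pderA a p).
Proof.
have E : pderA a (DA p) - DA (pderA a p) = 0.
  apply: (der_uniq (comm_der (pderA_der a) DA_der) zero_der) => i /=.
  by rewrite DA_kv !pderA_kv /DnA iterS subrr.
by apply/eqP; rewrite -subr_eq0 E.
Qed.

Lemma pder_Dn a m p : pderA a (DnA m p) = DnA m (pderA a p).
Proof. by elim: m => //= m IH; rewrite pder_D IH. Qed.

Lemma pder_bracket a b p :
  pderA a (pderA b p) - pderA b (pderA a p) = pderA (pderA a b - pderA b a) p.
Proof.
apply: (der_uniq (comm_der (pderA_der a) (pderA_der b)) (pderA_der _)) => i.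
by rewrite !pderA_kv !pder_Dn DnA_B.
Qed.

Lemma DA_cst G : DA (cst G) = 0.
Proof. by rewrite Hcst (derZ DA_der) (der1 DA_der) scaler0. Qed.
Lemma pder_cst a G : pderA a (cst G) = 0.
Proof. by rewrite Hcst (derZ (pderA_der a)) (der1 (pderA_der a)) scaler0. Qed.

Lemma Vgen_eq G V : DA V.1 = kvA 0 * V.2 -> forall m, VgenA G V m = DnA m (VkA G V).
Proof.
move=> hV; have hr : rhoA V = 0 by rewrite /rhoA hV subrr.
by elim=> //= m IH; rewrite hr mul0r addr0 IH.
Qed.

Lemma Vact_eq G V : DA V.1 = kvA 0 * V.2 -> forall h, VactA G V h = pderA (VkA G V) h.
Proof.
move=> hV h; rewrite /VactA /pderA /extDA; apply: eq_bigr => i _.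
by rewrite (Vgen_eq G hV).
Qed.

Lemma VkA_add G V W : VkA G (addVFA V W) = VkA G V + VkA G W.
Proof.
rewrite /VkA /phiA /rhoA /addVFA /=.
rewrite !((derD DA_der), (derB DA_der), (derM DA_der)).
ring.
Qed.

Lemma VkA_scale G c V : VkA G (scaleVFA c V) = c *: VkA G V.
Proof.
have DA_alg : DA (c%:A) = 0 by rewrite (derZ DA_der) (der1 DA_der) scaler0.
rewrite /scaleVFA -(mulr_algl c V.1) -(mulr_algl c V.2) -(mulr_algl c (VkA G V)).
rewrite /VkA /phiA /rhoA /=.
rewrite !((derD DA_der), (derB DA_der), (derM DA_der), DA_alg, (der0 DA_der)).
move: DA_alg; generalize (c%:A : A) => ca _; ring.
Qed.

Lemma pderA_add a b h : pderA (a + b) h = pderA a h + pderA b h.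
Proof.
rewrite /pderA /extDA -big_split /=; apply: eq_bigr => i _.
by rewrite DnA_D mulrDl.
Qed.

Lemma pderA_scale c a h : pderA (c *: a) h = c *: pderA a h.
Proof.
rewrite /pderA /extDA scaler_sumr; apply: eq_bigr => i _.
by rewrite DnA_Z scalerAl.
Qed.

Lemma VkA_brk G V W : DA V.1 = kvA 0 * V.2 -> DA W.1 = kvA 0 * W.2 ->
  VkA G (brkA G V W) = pderA (VkA G V) (VkA G W) - pderA (VkA G W) (VkA G V).
Proof.
move=> hV hW.
rewrite /brkA /covDA /= !(Vact_eq G hV) !(Vact_eq G hW).
have d1 := pderA_der (VkA G V); have d2 := pderA_der (VkA G W).
apply: (key (derD DA_der) (derN DA_der) (derM DA_der)
  (derD d1) (derN d1) (derM d1) (derD d2) (derN d2) (derM d2)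
  (pder_D _) (pder_D _) hV hW (DA_cst G) (pder_cst _ G) (pder_cst _ G)
  (pderA_kv _ 0) (pderA_kv _ 0)).
Qed.

Theorem mainA G V W c : DA V.1 = kvA 0 * V.2 -> DA W.1 = kvA 0 * W.2 ->
  [/\ (forall h, PhiA G (addVFA V W) h = PhiA G V h + PhiA G W h),
      (forall h, PhiA G (scaleVFA c V) h = c *: PhiA G V h)
    & (forall h, PhiA G (brkA G V W) h = PhiA G V (PhiA G W h) - PhiA G W (PhiA G V h))].
Proof.
move=> hV hW; split=> h; rewrite /PhiA.
- by rewrite VkA_add pderA_add.
- by rewrite VkA_scale pderA_scale.
- by rewrite VkA_brk // pder_bracket.
Qed.
End Abstract.
Section Base.
Variable R : realType.
Local Notation P := (P R).
Local Notation pd := (@pd R).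
Local Notation kv := (@kv R).
Local Notation D := (@D R).
Local Notation Dn := (@Dn R).
Local Notation extD := (@extD R).
Local Notation pder := (@pder R).
Local Notation nvar := (@nvar R).

Lemma monU c (m : cmonom nat) : << c *g m >> = c *: (<< m >> : P).
Proof. by rewrite -mul_malgC malgM_def fgmulUU mulr1 mul1m. Qed.

Lemma monM (m1 m2 : cmonom nat) : (<<m1>> : P) * <<m2>> = << mmul m1 m2 >>.
Proof. by rewrite malgM_def fgmulUU mulr1. Qed.

Definition hpd (i : nat) (m : cmonom nat) : P := (m i)%:R *: << divcm m (ucm i) >>.

Lemma pdE i (p : P) : pd i p = mmap (@malgC _ R) (hpd i) p.
Proof.
rewrite /pd mmapE; apply: eq_bigr => m _.
by rewrite mul_malgC /hpd scalerA.
Qed.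

Lemma pdD i : {morph pd i : x y / x + y}.
Proof. by move=> x y; rewrite !pdE mmapD. Qed.
Lemma pdN i : {morph pd i : x / - x}.
Proof. by move=> x; rewrite !pdE mmapN. Qed.
Lemma pd0 i : pd i 0 = 0.
Proof. by rewrite pdE mmap0. Qed.
Lemma pdB i : {morph pd i : x y / x - y}.
Proof. by move=> x y; rewrite pdD pdN. Qed.
Lemma pdU i c m : pd i << c *g m >> = c *: hpd i m.
Proof. by rewrite pdE mmapU mul_malgC. Qed.
Lemma pd_sum i (I : Type) (r : seq I) (F : I -> P) :
  pd i (\sum_(j <- r) F j) = \sum_(j <- r) pd i (F j).
Proof. elim: r => [|a r IH]; by rewrite ?big_nil ?big_cons ?pd0 ?pdD ?IH. Qed.

Lemma divcmM1 (m1 m2 : cmonom nat) i : (0 < m1 i)%N ->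
  divcm (mmul m1 m2) (ucm i) = mmul (divcm m1 (ucm i)) m2.
Proof.
move=> h; apply/eqP/cmP => j; rewrite divcmE !cmM divcmE ucmE.
by case: eqP => [<-|]; lia.
Qed.

Lemma divcmM2 (m1 m2 : cmonom nat) i : (0 < m2 i)%N ->
  divcm (mmul m1 m2) (ucm i) = mmul m1 (divcm m2 (ucm i)).
Proof. by move=> h; rewrite mulmC divcmM1 // mulmC. Qed.

Lemma sAl (k : R) (x y : P) : (k *: x) * y = k *: (x * y).
Proof. by rewrite scalerAl. Qed.
Lemma sAr (k : R) (x y : P) : x * (k *: y) = k *: (x * y).
Proof. by rewrite scalerAr. Qed.

Lemma comb (A : algType R) (a b : nat) (L Y1 M2 M1 Y2 : A) :
  ((0 < a)%N -> Y1 * M2 = L) -> ((0 < b)%N -> M1 * Y2 = L) ->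
  (a + b)%:R *: L = a%:R *: Y1 * M2 + M1 * (b%:R *: Y2).
Proof.
case: a => [|a]; case: b => [|b] h1 h2; rewrite ?add0n ?addn0 ?mulr0n ?scale0r ?mul0r ?mulr0 ?add0r ?addr0 ?scaler0 //.
- by rewrite -scalerAr h2.
- by rewrite -scalerAl h1.
- by rewrite -scalerAl -scalerAr h1 // h2 // natrD scalerDl.
Qed.

Lemma combZ (A : algType R) (c d : R) (X Y Z W : A) :
  (c * d) *: (X * Y + Z * W) = (c *: X) * (d *: Y) + (c *: Z) * (d *: W).
Proof. by rewrite -!scalerAl -!scalerAr !scalerA scalerDr. Qed.

Lemma hpdM i (m1 m2 : cmonom nat) : hpd i (mmul m1 m2) = hpd i m1 * <<m2>> + <<m1>> * hpd i m2.
Proof.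
rewrite /hpd cmM; apply: comb => h; rewrite monM.
  by rewrite divcmM1.
by rewrite divcmM2.
Qed.

Lemma pdZ i c (p : P) : pd i (c *: p) = c *: pd i p.
Proof.
transitivity (\sum_(k <- msupp p) (c * p@_k)%:MP * hpd i k).
  rewrite pdE (mmapEw (msuppZ_le c p)).
  by apply: eq_bigr => k _; rewrite mcoeffZ.
rewrite pdE mmapE scaler_sumr.
by apply: eq_bigr => k _; rewrite [in LHS]mul_malgC [in RHS]mul_malgC [in RHS]scalerA.
Qed.

Lemma ringE1 (A : comRingType) (a b c d q pq : A) :
  (c * q + a * pq) + (d * q + b * pq) = (c + d) * q + (a + b) * pq.
Proof. by ring. Qed.
Lemma ringE2 (A : comRingType) (a b c d q pq : A) :
  (c * q + pq * a) + (d * q + pq * b) = (c + d) * q + pq * (a + b).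
Proof. by ring. Qed.

Lemma dM_suml (A : comRingType) (d : A -> A) (T : Type) (s : seq T) (F : T -> A) (q : A) :
  d 0 = 0 -> (forall x y, d (x + y) = d x + d y) ->
  (forall x, d (F x * q) = d (F x) * q + F x * d q) ->
  d ((\sum_(x <- s) F x) * q) = d (\sum_(x <- s) F x) * q + (\sum_(x <- s) F x) * d q.
Proof.
move=> d0 dD H; elim: s => [|a s IH].
  by rewrite !big_nil !mul0r d0 !mul0r add0r.
by rewrite !big_cons mulrDl !dD IH H; ring.
Qed.

Lemma dM_sumr (A : comRingType) (d : A -> A) (T : Type) (s : seq T) (F : T -> A) (q : A) :
  d 0 = 0 -> (forall x y, d (x + y) = d x + d y) ->
  (forall x, d (q * F x) = d q * F x + q * d (F x)) ->
  d (q * \sum_(x <- s) F x) = d q * (\sum_(x <- s) F x) + q * d (\sum_(x <- s) F x).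
Proof.
move=> d0 dD H; elim: s => [|a s IH].
  by rewrite !big_nil !mulr0 d0 !mulr0 add0r.
by rewrite !big_cons mulrDr !dD IH H; ring.
Qed.

Lemma combZ' (A : algType R) c d (L X1 Y1 X2 Y2 PL P1 P2 M1 M2 : A) :
  PL = (c*d) *: L -> L = X1 * M2 + M1 * X2 -> P1 = c *: X1 -> P2 = d *: X2 ->
  Y1 = c *: M1 -> Y2 = d *: M2 -> PL = P1 * Y2 + Y1 * P2.
Proof. by move=> -> -> -> -> -> ->; rewrite combZ. Qed.

Lemma pdMU i c d m1 m2 : pd i (<<c *g m1>> * <<d *g m2>>) =
  pd i <<c *g m1>> * <<d *g m2>> + <<c *g m1>> * pd i <<d *g m2>>.
Proof.
have h3 : pd i (<<c *g m1>> * <<d *g m2>>) = (c * d) *: hpd i (mmul m1 m2).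
  have -> : <<c *g m1>> * <<d *g m2>> = <<c * d *g mmul m1 m2>> :> P.
    by rewrite malgM_def fgmulUU.
  exact: pdU.
exact: (combZ' h3 (hpdM i m1 m2) (pdU i c m1) (pdU i d m2) (monU c m1) (monU d m2)).
Qed.

Lemma pdM i (p q : P) : pd i (p * q) = pd i p * q + p * pd i q.
Proof.
rewrite (monalgE p); apply: dM_suml; [exact: pd0 | exact: pdD | move=> m1].
rewrite (monalgE q); apply: dM_sumr; [exact: pd0 | exact: pdD | move=> m2].
exact: pdMU.
Qed.

Lemma pd_kv i j : pd i (kv j) = (i == j)%:R.
Proof.
rewrite /kv pdU /hpd ucmE scale1r.
case: (eqVneq j i) => [->|ne].
  have -> : divcm (ucm i) (ucm i) = mone.
    by apply/eqP/cmP => k; rewrite divcmE subnn cm1.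
  by rewrite mulr1n scale1r mpolyC1E.
by rewrite mulr0n scale0r.
Qed.

Lemma cst_eq (c : R) : c%:MP = c%:A :> P.
Proof. by rewrite -mul_malgC mulr1. Qed.

Lemma pd_nvar i (p : P) : (nvar p <= i)%N -> pd i p = 0.
Proof.
move=> hp; rewrite /pd big1_seq // => mon /andP[_ hmon].
have -> : mon i = 0%N.
  apply/eqP; rewrite cmE_eq0; apply/negP => hi.
  have h1 : (i.+1 <= \max_(j <- finsupp mon) j.+1)%N := @leq_bigmax_seq _ (finsupp mon : seq nat) xpredT (fun j => j.+1) i hi isT.
  have h2 : (\max_(j <- finsupp mon) j.+1 <= nvar p)%N :=
    @leq_bigmax_seq _ (msupp p : seq _) xpredT (fun mon => \max_(j <- finsupp mon) j.+1)%N mon hmon isT.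
  lia.
by rewrite mulr0 scale0r.
Qed.

Lemma P_ind (Q : P -> Prop) : Q 1 -> (forall i, Q (kv i)) ->
  (forall x y, Q x -> Q y -> Q (x + y)) -> (forall x y, Q x -> Q y -> Q (x * y)) ->
  (forall c x, Q x -> Q (c *: x)) -> forall p, Q p.
Proof.
move=> h1 hk hD hM hZ.
have h0 : Q 0 by have := hZ 0 1 h1; rewrite scale0r.
have hm : forall m : cmonom nat, Q <<m>>.
  move=> m; move hn : (mdeg m) => n; elim: n m hn => [|n IH] m hn.
    by rewrite (mdeg_eq0I hn).
  have : finsupp m != fset0.
    by apply/negP => /eqP e; move: hn; rewrite mdegE e big_seq_fset0.
  case/fset0Pn => i hi.
  have hmi : (0 < m i)%N by rewrite lt0n cmE_neq0.
  set m' := divcm m (ucm i).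
  have em : m = mmul (ucm i) m'.
    by apply/eqP/cmP => j; rewrite cmM /m' divcmE ucmE; case: eqP => [<-|]; lia.
  have hd : mdeg m' = n by move: hn; rewrite {1}em mdegM mdegU; lia.
  rewrite em.
  rewrite -monM.
  apply: hM.
  exact: hk.
  exact: (IH m' hd).
move=> p; rewrite (monalgE p).
apply: (big_ind Q h0 hD).
move=> k _.
rewrite monU.
apply: hZ.
apply: hm.
Qed.

Lemma pd_der i : isDer (pd i).
Proof. by split; [exact: pdD | exact: pdZ | exact: pdM]. Qed.
End Base.

Unset Implicit Arguments.
Theorem proposition4p2 (R : realType) (G : R) (V W : VF R) (c : R) :
  inT V -> inT W ->
  [/\ (forall h : P R, Phi G (addVF V W) h = Phi G V h + Phi G W h),
      (forall h : P R, Phi G (scaleVF c V) h = c *: Phi G V h)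
    & (forall h : P R,
         Phi G (brk G V W) h = Phi G V (Phi G W h) - Phi G W (Phi G V h))].
Proof.
move=> hV hW.
exact: (@mainA R (P R) (@pd R) (@nvar R) (@kv R) (fun c => c%:MP) (@pd_der R) (@pd_nvar R) (@pd_kv R) (@P_ind R) (@cst_eq R) G V W c hV.2 hW.2).
Qed.
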